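(* Let $J$ be an indecomposable module in category $\mathcal{J}$, let $\lambda\in\mathbb{C}^n$ be a weight of $J$, and let $U=J_\lambda$. For $j=1,\dots,n$ and $s\in\mathbb{Z}^n$, define $D_j(s)\in\mathrm{End}\,U$ by $D_j(s)u=e_{-s}\,(d_j(s)u)$. Then for all $j,k$ and $s,m\in\mathbb{Z}^n$, $$[D_j(s),D_k(m)]=m_j\big(D_k(s+m)-D_k(m)\big)-s_k\big(D_j(s+m)-D_j(s)\big).$$
   Context: Let $n\ge 1$. Let $\mathcal{F}(\mathbb{T}^n)$ be the commutative algebra with $\mathbb{C}$-basis $e_m=e^{2\pi i m\cdot x}$, $m\in\mathbb{Z}^n$, and $e_me_k=e_{m+k}$. Let $W_n$ be the Lie algebra with $\mathbb{C}$-basis $d_j(s)=\frac{1}{2\pi i}e^{2\pi i s\cdot x}\frac{\partial}{\partial x^j}$, for $j=1,\dots,n$ and $s\in\mathbb{Z}^n$, and bracket $$[d_j(s),d_k(m)]=m_j\,d_k(s+m)-s_k\,d_j(s+m).$$ $W_n$ acts on $\mathcal{F}(\mathbb{T}^n)$ by derivations via $d_j(s)e_m=m_je_{m+s}$. Write $d_j=d_j(0)$. Category $\mathcal{J}$ consists of $W_n$-modules $J$ that are also $\mathcal{F}(\mathbb{T}^n)$-modules and satisfy: (J1) each $d_j$ acts diagonalizably on $J$; (J2) $J$ is a free $\mathcal{F}(\mathbb{T}^n)$-module of finite rank; (J3) $u(fw)=(uf)w+f(uw)$ for all $u\in W_n$, $f\in\mathcal{F}(\mathbb{T}^n)$, $w\in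 J$. For $\mu\in\mathbb{C}^n$, the weight space is $J_\mu=\{w\in J: d_jw=\mu_jw \text{ for all } j\}$. Submodules are subspaces invariant under both $W_n$ and $\mathcal{F}(\mathbb{T}^n)$. Indecomposable modules are nonzero. *)

(* Defs.v *)
From HB Require Import structures.
From mathcomp Require Import all_boot all_order all_algebra.
From mathcomp Require Import complex.
From mathcomp Require Import Rstruct.
From Stdlib Require Import Rdefinitions.
Set Implicit Arguments. Unset Strict Implicit. Unset Printing Implicit Defensive.
Import GRing.Theory.
Local Open Scope ring_scope.

Definition CC : fieldType := (Rdefinitions.R)[i].

(* Z^n is represented as row vectors 'rV[int]_n; m_j is m 0 j. *)
Notation Zn n := 'rV[int]_n.

(* A "J-structure" on the C-vector space J: operators e m (action of the
   basis element e_m of F(T^n)) and d j s (action of d_j(s) in W_n). *)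
Section Jcat.
Variables (n : nat) (J : lmodType CC).
Variables (e : Zn n -> J -> J) (d : 'I_n -> Zn n -> J -> J).

Definition F_module : Prop :=
  (forall m, linear (e m)) /\ (forall w, e 0 w = w) /\
  (forall m k w, e (m + k) w = e m (e k w)).

Definition W_module : Prop :=
  (forall j s, linear (d j s)) /\
  (forall j k s m w,
     d j s (d k m w) - d k m (d j s w) =
     (m 0 j)%:~R *: d k (s + m) w - (s 0 k)%:~R *: d j (s + m) w).

Definition J1 : Prop :=
  forall j w, exists (r : seq (CC * J)),
    (forall p, p \in r -> d j 0 p.2 = p.1 *: p.2) /\
    w = \sum_(p <- r) p.2.

(* Action of f = sum_{m in s} f m e_m on w. *)
Definition Fact (s : seq (Zn n)) (f : Zn n -> CC) (w : J) : J :=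
  \sum_(m <- s) f m *: e m w.

(* (J2) J is a free F(T^n)-module of finite rank. *)
Definition J2 : Prop :=
  exists (r : nat) (b : 'I_r -> J),
    (forall w, exists (s : seq (Zn n)) (f : 'I_r -> Zn n -> CC),
        w = \sum_(i < r) Fact s (f i) (b i)) /\
    (forall (s : seq (Zn n)) (f : 'I_r -> Zn n -> CC), uniq s ->
        \sum_(i < r) Fact s (f i) (b i) = 0 ->
        forall i m, m \in s -> f i m = 0).

(* (J3) compatibility u(f w) = (u f) w + f (u w) on basis elements:
   d_j(s)(e_m w) = m_j e_{m+s} w + e_m (d_j(s) w). *)
Definition J3 : Prop :=
  forall j s m w, d j s (e m w) = (m 0 j)%:~R *: e (m + s) w + e m (d j s w).

Definition in_cat_J : Prop := F_module /\ W_module /\ J1 /\ J2 /\ J3.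

Definition submodule (A : J -> Prop) : Prop :=
  A 0 /\ (forall x y, A x -> A y -> A (x + y)) /\
  (forall (c : CC) x, A x -> A (c *: x)) /\
  (forall m x, A x -> A (e m x)) /\
  (forall j s x, A x -> A (d j s x)).

Definition indecomposable : Prop :=
  (exists w : J, w <> 0) /\
  forall A B : J -> Prop, submodule A -> submodule B ->
    (forall x, A x -> B x -> x = 0) ->
    (forall w, exists a b, A a /\ B b /\ w = a + b) ->
    (forall x, A x -> x = 0) \/ (forall x, B x -> x = 0).

Definition weight_space (mu : 'I_n -> CC) (w : J) : Prop :=
  forall j, d j 0 w = mu j *: w.

Definition is_weight (mu : 'I_n -> CC) : Prop :=
  exists w, w <> 0 /\ weight_space mu w.

Definition DD (j : 'I_n) (s : Zn n) (u : J) : J := e (- s) (d j s u).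

End Jcat.

(* Main.v *)
Require Import Defs.
From HB Require Import structures.
From mathcomp Require Import all_boot all_order all_algebra.
Import GRing.Theory.
Local Open Scope ring_scope.

Section H.
Variables (J : lmodType CC) (f : J -> J) (Hf : linear f).
Lemma lf_add u v : f (u + v) = f u + f v.
Proof. by have := Hf 1 u v; rewrite !scale1r. Qed.
Lemma lf_0 : f 0 = 0.
Proof. have h := lf_add 0 0; rewrite addr0 in h. by apply: (addrI (f 0)); rewrite addr0 -h. Qed.
Lemma lf_scale a u : f (a *: u) = a *: f u.
Proof. by have := Hf a u 0; rewrite !addr0 lf_0 addr0. Qed.
Lemma lf_sub u v : f (u - v) = f u - f v.
Proof. by rewrite lf_add -scaleN1r lf_scale scaleN1r. Qed.
End H.
Arguments lf_add {J f}. Arguments lf_0 {J f}. Arguments lf_scale {J f}. Arguments lf_sub {J f}.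

Lemma zl (V : zmodType) (A C D B Y : V) :
  (-A + (C - D + Y)) - (-B + Y) = (C - A) - (D - B).
Proof. by rewrite opprD opprK -!addrA (addrC B) addNKr addrCA; congr (_ + _); congr (_ + _); rewrite opprB addrC. Qed.

Theorem lemma1 (n : nat) (J : lmodType CC)
  (e : Zn n -> J -> J) (d : 'I_n -> Zn n -> J -> J)
  (HJ : in_cat_J e d) (Hind : indecomposable e d)
  (lambda : 'I_n -> CC) (Hl : is_weight d lambda) :
  (forall j s u, weight_space d lambda u ->
      weight_space d lambda (DD e d j s u)) /\
  (forall j k s m u, weight_space d lambda u ->
      DD e d j s (DD e d k m u) - DD e d k m (DD e d j s u) =
      (m 0 j)%:~R *: (DD e d k (s + m) u - DD e d k m u)
      - (s 0 k)%:~R *: (DD e d j (s + m) u - DD e d j s u)).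
Proof.
  case: HJ => [[eL [e0 eM]] [[dL dW] [_ [_ HJ3]]]].
  have J3 := HJ3; rewrite /Defs.J3 in J3.
  have oppE (s : Zn n) (j : 'I_n) : (- s) 0 j = - s 0 j by rewrite mxE.
  split.
  - move=> j s u Hu k; rewrite /DD J3 addr0.
    have := dW k j 0 s u; rewrite add0r Hu (lf_scale (dL _ _)) mxE mulr0z scale0r subr0.
    move/eqP; rewrite subr_eq => /eqP ->.
    rewrite (lf_add (eL _)) !(lf_scale (eL _)) oppE.
    rewrite addrA -scalerDl addrC -scalerDl; congr (_ *: _).
    by rewrite rmorphN addrA addrNK.
  - move=> j k s m u _; rewrite /DD.
    have key (j0 k0 : 'I_n) (s0 m0 : Zn n) :
        e (- s0) (d j0 s0 (e (- m0) (d k0 m0 u))) =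
        - (m0 0 j0)%:~R *: e (- m0) (d k0 m0 u) + e (- (s0 + m0)) (d j0 s0 (d k0 m0 u)).
      rewrite J3 (lf_add (eL _)) (lf_scale (eL _)) oppE rmorphN -!eM.
      by rewrite addrCA addNr addr0 opprD.
    rewrite !key [m + s]addrC.
    have := dW j k s m u; move/(congr1 (e (- (s + m)))).
    rewrite (lf_sub (eL _)) (lf_sub (eL _)) !(lf_scale (eL _)).
    move/eqP; rewrite subr_eq => /eqP ->.
    by rewrite !scalerBr !scaleNr zl.
Qed.
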